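(* Let $X=(\mathbb N,\tau_{cof})$ be the natural numbers with the co-finite topology (open sets: $\emptyset$ and complements of finite sets). Then $X$ is a $d$-space and is $s$-well-filtered, the closed Rudin sets of $X$ are exactly $\mathbb N$ and the singletons $\{n\}$, $n\in\mathbb N$, and $X$ is not well-filtered. In particular, an $s$-well-filtered space need not be well-filtered.
   Context: A $T_0$ space $X$ is a $d$-space if $X$ with the specialization order is a dcpo and every open set is Scott open. $Q(X)$ denotes the nonempty compact saturated subsets of $X$; a family of such sets is filtered if nonempty and any two members contain a third member. $X$ is well-filtered if for every open $U$ and filtered $\mathcal K\subseteq Q(X)$, $\bigcap\mathcal K\subseteq U$ implies $K\subseteq U$ for some $K\in\mathcal K$. A set $A$ is strongly compact if for every open $U\supseteq A$ there is a finite $F$ with $A\subseteq\uparrow F\subseteq U$; $Q_s(X)$ is the set of nonempty strongly compact saturated sets, and $X$ is $s$-well-filtered if the well-filtered condition holds for filtered $\mathcal K\subseteq Q_s(X)$. A Rudin set is a nonempty $A$ such that, for some filtered $\mathcal K\subseteq Q(X)$, $\overline A$ is a minimal closed set meeting every member of $\mathcal K$. *)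

(* Defs.v *)
From Stdlib Require Import List.
Import ListNotations.

Section Topo.
Variable T : Type.
Variable open : (T -> Prop) -> Prop.

Definition subset (A B : T -> Prop) : Prop := forall x, A x -> B x.

Definition closed (A : T -> Prop) : Prop := open (fun x => ~ A x).

Definition closure (A : T -> Prop) : T -> Prop :=
  fun x => forall C, closed C -> subset A C -> C x.

Definition spec_le (x y : T) : Prop := closure (fun z => z = y) x.

Definition T0 : Prop := forall x y, spec_le x y -> spec_le y x -> x = y.

Definition directed (D : T -> Prop) : Prop :=
  (exists x, D x) /\
  forall x y, D x -> D y -> exists z, D z /\ spec_le x z /\ spec_le y z.

Definition is_sup (D : T -> Prop) (s : T) : Prop :=
  (forall x, D x -> spec_le x s) /\
  (forall u, (forall x, D x -> spec_le x u) -> spec_le s u).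

Definition dcpo : Prop := forall D, directed D -> exists s, is_sup D s.

Definition upper (A : T -> Prop) : Prop := forall x y, A x -> spec_le x y -> A y.

Definition scott_open (U : T -> Prop) : Prop :=
  upper U /\
  forall D s, directed D -> is_sup D s -> U s -> exists d, D d /\ U d.

Definition d_space : Prop :=
  T0 /\ dcpo /\ forall U, open U -> scott_open U.

Definition saturated (A : T -> Prop) : Prop :=
  forall x, (forall U, open U -> subset A U -> U x) -> A x.

Definition compact (A : T -> Prop) : Prop :=
  forall F : (T -> Prop) -> Prop,
    (forall U, F U -> open U) ->
    subset A (fun x => exists U, F U /\ U x) ->
    exists l : list (T -> Prop),
      (forall U, In U l -> F U) /\ subset A (fun x => exists U, In U l /\ U x).

Definition inQ (A : T -> Prop) : Prop := (exists x, A x) /\ compact A /\ saturated A.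

Definition upF (l : list T) : T -> Prop := fun x => exists y, In y l /\ spec_le y x.

Definition strongly_compact (A : T -> Prop) : Prop :=
  forall U, open U -> subset A U ->
    exists l : list T, subset A (upF l) /\ subset (upF l) U.

Definition inQs (A : T -> Prop) : Prop :=
  (exists x, A x) /\ strongly_compact A /\ saturated A.

Definition filtered (K : (T -> Prop) -> Prop) : Prop :=
  (exists A, K A) /\
  forall A B, K A -> K B ->
    exists C, K C /\ subset C A /\ subset C B.

Definition bigcap (K : (T -> Prop) -> Prop) : T -> Prop :=
  fun x => forall A, K A -> A x.

Definition well_filtered : Prop :=
  forall U (K : (T -> Prop) -> Prop),
    open U -> (forall A, K A -> inQ A) -> filtered K ->
    subset (bigcap K) U -> exists A, K A /\ subset A U.

Definition s_well_filtered : Prop :=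
  forall U (K : (T -> Prop) -> Prop),
    open U -> (forall A, K A -> inQs A) -> filtered K ->
    subset (bigcap K) U -> exists A, K A /\ subset A U.

Definition meets (A B : T -> Prop) : Prop := exists x, A x /\ B x.

Definition minimal_closed_meeting (K : (T -> Prop) -> Prop) (C : T -> Prop) : Prop :=
  closed C /\ (forall A, K A -> meets C A) /\
  forall B, closed B -> subset B C -> (forall A, K A -> meets B A) -> subset C B.

Definition rudin (A : T -> Prop) : Prop :=
  (exists x, A x) /\
  exists K : (T -> Prop) -> Prop,
    (forall Q, K Q -> inQ Q) /\ filtered K /\ minimal_closed_meeting K (closure A).

End Topo.

Definition cof_open (U : nat -> Prop) : Prop :=
  (forall x, ~ U x) \/ exists l : list nat, forall x, U x <-> ~ In x l.

(* Main.v *)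
Require Import Defs.
From Stdlib Require Import List.
From Stdlib Require Import Classical Lia.
Import ListNotations.

Lemma spec_eq x y : spec_le nat cof_open x y -> x = y.
Proof.
  intro H. apply H.
  - unfold closed, cof_open. right. exists [y]. intro z. simpl. split.
    + intros H1 [H2|[]]. apply H1; congruence.
    + intros H1 H2. apply H1. left; congruence.
  - intros z Hz; exact Hz.
Qed.

Lemma spec_refl x : spec_le nat cof_open x x.
Proof. intros C _ HC. apply HC. reflexivity. Qed.

Lemma all_compact A : compact nat cof_open A.
Proof.
  intros F HF Hcov.
  destruct (classic (exists x, A x)) as [[x0 Hx0]|Hne].
  2:{ exists []; split; [intros U []| intros x Hx; exfalso; eauto]. }
  destruct (Hcov x0 Hx0) as [U0 [HU0 HU0x]].
  destruct (HF U0 HU0) as [Hemp|[m Hm]]. { exfalso; exact (Hemp x0 HU0x). }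
  assert (Hl: exists l, (forall U, In U l -> F U) /\
     forall y, In y m -> A y -> exists U, In U l /\ U y).
  { clear - Hcov. induction m as [|y m IH].
    - exists []. split. intros U []. intros y [].
    - destruct IH as [l [Hl1 Hl2]].
      destruct (classic (A y)) as [Hy|Hy].
      + destruct (Hcov y Hy) as [U [HU HUy]]. exists (U :: l). split.
        * intros V [<-|HV]; auto.
        * intros z [<-|Hz] Hza. exists U; split; simpl; auto.
          destruct (Hl2 z Hz Hza) as [V [HV HVz]]. exists V; split; simpl; auto.
      + exists l. split; auto. intros z [<-|Hz] Hza. contradiction. auto. }
  destruct Hl as [l [Hl1 Hl2]].
  exists (U0 :: l). split.
  - intros U [<-|HU]; auto.
  - intros x Hx. destruct (classic (In x m)) as [Hin|Hnin].
    + destruct (Hl2 x Hin Hx) as [V [HV HVx]]. exists V; split; simpl; auto.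
    + exists U0. split; simpl; auto. apply Hm; auto.
Qed.

Lemma all_saturated A : saturated nat cof_open A.
Proof.
  intros x Hx. destruct (classic (A x)) as [H|H]; auto. exfalso.
  assert (Ho: cof_open (fun z => z <> x)).
  { right. exists [x]. intro z; simpl; split.
    - intros H1 [H2|[]]. apply H1; congruence.
    - intros H1 H2. apply H1. left; congruence. }
  refine (Hx (fun z => z <> x) Ho _ eq_refl).
  intros z Hz Hzx. subst. contradiction.
Qed.

Lemma filt_lemma (K : (nat->Prop)->Prop) A0 :
  filtered nat K -> K A0 -> forall l, exists C, K C /\ subset nat C A0 /\
    forall y, In y l -> C y -> bigcap nat K y.
Proof.
  intros HK HA0 l. induction l as [|y l IH].
  - exists A0. split; auto. split. intros x Hx; exact Hx. intros y [].
  - destruct IH as [C [HC [HCA HCl]]].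
    destruct (classic (bigcap nat K y)) as [Hy|Hy].
    + exists C; split; auto; split; auto. intros z [<-|Hz] Hcz; auto.
    + assert (exists A, K A /\ ~ A y) as [A [HA HAy]].
      { apply NNPP; intro Hn; apply Hy; intros A HA; apply NNPP; intro HAy;
        apply Hn; eauto. }
      destruct (proj2 HK C A HC HA) as [D [HD [HDC HDA]]].
      exists D. split; auto. split.
      * intros x Hx; apply HCA, HDC, Hx.
      * intros z [<-|Hz] Hdz. exfalso; apply HAy, HDA, Hdz. apply HCl; auto.
Qed.

Lemma clos_closed A : closed nat cof_open A ->
  forall x, closure nat cof_open A x <-> A x.
Proof.
  intros H x. split.
  - intro Hx. apply Hx; auto. intros y Hy; exact Hy.
  - intros Hx C _ HC. apply HC, Hx.
Qed.

Lemma bound (l : list nat) : exists m, forall x, In x l -> x < m.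
Proof.
  induction l as [|a l [m Hm]].
  - exists 0. intros x [].
  - exists (S (a + m)). intros x [<-|H]. lia. specialize (Hm x H); lia.
Qed.

Definition upK : (nat -> Prop) -> Prop := fun Q => exists n, forall x, Q x <-> n <= x.

Lemma upK_Q Q : upK Q -> inQ nat cof_open Q.
Proof.
  intros [n Hn]. split. exists n; apply Hn; auto.
  split. apply all_compact. apply all_saturated.
Qed.

Lemma upK_filtered : filtered nat upK.
Proof.
  split. exists (fun x => 0 <= x), 0. intro; tauto.
  intros Q1 Q2 [n1 H1] [n2 H2]. exists (fun x => max n1 n2 <= x). split.
  exists (max n1 n2); intro; tauto.
  split; intros x Hx; [apply H1|apply H2]; lia.
Qed.

Lemma singleton_closed n : closed nat cof_open (fun x => x = n).
Proof.
  right. exists [n]. intro x. simpl. split.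
  - intros H1 [H2|[]]. apply H1; congruence.
  - intros H1 H2. apply H1. left; congruence.
Qed.

Theorem mainTheorem2 :
  d_space nat cof_open /\
  s_well_filtered nat cof_open /\
  (forall A : nat -> Prop,
     (closed nat cof_open A /\ rudin nat cof_open A) <->
     ((forall x, A x) \/ exists n, forall x, A x <-> x = n)) /\
  ~ well_filtered nat cof_open.
Proof.
  split; [|split; [|split]].
  - split. { intros x y H _. apply spec_eq; auto. }
    split.
    + intros D [[x Hx] Hd]. exists x. split.
      * intros y Hy. destruct (Hd y x Hy Hx) as [z [_ [H1 H2]]].
        apply spec_eq in H1. apply spec_eq in H2. subst. apply spec_refl.
      * intros u Hu. apply Hu; auto.
    + intros U HU. split.
      * intros x y Hx H. apply spec_eq in H; subst; auto.
      * intros D s [[x Hx] _] [Hs _] HUs. exists x. split; auto.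
        rewrite (spec_eq _ _ (Hs x Hx)). auto.
  - intros U K HU HK HKf Hsub. destruct (proj1 HKf) as [A0 HA0].
    destruct (HK A0 HA0) as [_ [Hsc _]].
    destruct (Hsc (fun _ => True)) as [l0 [Hl0 _]].
    { right. exists []. intro x; simpl; tauto. }
    { intros x _; exact I. }
    destruct (filt_lemma K A0 HKf HA0 l0) as [C [HC [HCA HCl]]].
    exists C. split; auto. intros x Hx. apply Hsub.
    destruct (Hl0 x (HCA x Hx)) as [y [Hy Hyx]]. apply spec_eq in Hyx. subst.
    apply HCl; auto.
  - intro A. split.
    + intros [Hcl [[a Ha] [K [HKQ [HKf [Hclo [Hmeet Hmin]]]]]]].
      pose proof Hcl as Hcl'.
      destruct Hcl as [Hall|[l Hl]].
      * left. intro x. apply NNPP. apply Hall.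
      * right. destruct (proj1 HKf) as [A0 HA0].
        destruct (filt_lemma K A0 HKf HA0 l) as [C [HC [_ HCl]]].
        destruct (Hmeet C HC) as [z [Hz HCz]].
        apply (proj1 (clos_closed A Hcl' z)) in Hz.
        assert (Hzl: In z l)
          by (apply NNPP; intro Hn; apply (proj2 (Hl z) Hn); exact Hz).
        assert (Hsub: subset nat (closure nat cof_open A) (fun x => x = z)).
        { apply Hmin. apply singleton_closed.
          - intros x ->. apply (clos_closed A Hcl'); auto.
          - intros Q HQ. exists z; split; auto. apply HCl; auto. }
        exists z. intro x. split.
        -- intro Hx. apply Hsub. apply (clos_closed A Hcl'); auto.
        -- intros ->. exact Hz.
    + intros [Hall|[n Hn]].
      * split. { left. intros x Hx. apply Hx, Hall. }
        split. { exists 0; auto. }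
        exists upK. split. exact upK_Q. split. exact upK_filtered.
        split. { left. intros x Hx. apply Hx. intros C _ HC. apply HC, Hall. }
        split.
        { intros Q [n Hn]. exists n. split. intros C _ HC; apply HC, Hall.
          apply Hn; auto. }
        intros B HB _ HBm x _. destruct HB as [HBall|[l Hl]].
        { apply NNPP, HBall. }
        exfalso. destruct (bound l) as [m Hm].
        destruct (HBm (fun x => m <= x)) as [y [Hy Hmy]].
        { exists m; intro; tauto. }
        assert (In y l) by (apply NNPP; intro Hn; apply (proj2 (Hl y) Hn); exact Hy).
        specialize (Hm y H). lia.
      * assert (HclA : closed nat cof_open A).
        { right. exists [n]. intro x. simpl. rewrite Hn. split.
          - intros H1 [H2|[]]. apply H1; congruence.
          - intros H1 H2. apply H1. left; congruence. }
        split. exact HclA.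
        split. { exists n; apply Hn; auto. }
        exists (fun Q => forall x, Q x <-> x = n). split.
        { intros Q HQ. split. exists n; apply HQ; auto.
          split; [apply all_compact|apply all_saturated]. }
        split.
        { split. exists A; auto. intros Q1 Q2 H1 H2. exists Q1. split; auto.
          split. intros x; auto. intros x Hx. apply H2, H1, Hx. }
        split.
        { right. exists [n]. intro x. rewrite (clos_closed A HclA x), Hn. simpl. split.
          - intros H1 [H2|[]]. apply H1; congruence.
          - intros H1 H2. apply H1. left; congruence. }
        split.
        { intros Q HQ. exists n. split. apply clos_closed; auto; apply Hn; auto.
          apply HQ; auto. }
        intros B HB HBsub HBm. destruct (HBm (fun x => x = n)) as [y [Hy Hyn]].
        { intro; tauto. }
        subst y. intros x Hx. apply (proj1 (clos_closed A HclA x)) in Hx. apply Hn in Hx.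
        subst; auto.
  - intro Hwf. destruct (Hwf (fun _ => False) upK) as [Q [[n Hn] HQ]].
    + left; auto.
    + exact upK_Q.
    + exact upK_filtered.
    + intros x Hx. specialize (Hx (fun y => S x <= y) (ex_intro _ (S x) (fun y => iff_refl _))).
      simpl in Hx. lia.
    + apply (HQ n). apply Hn; auto.
Qed.
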